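(* Let $a\in(0,1)$ and $p(z)=(z-a)\prod_{k=1}^{8}(z-z_k)$ with $|z_k|\le1$ and $z_k\ne a$, and write $p'(z)=9\prod_{j=1}^{8}(z-\zeta_j)$. Let $r_k=|a-z_k|$, $\rho_j=|a-\zeta_j|$, and suppose $\rho_j\ge1$ for all $j$. Then $$\prod_{j=1}^{8}|\zeta_j|\le\Big(\prod_{j=1}^{8}\rho_j\Big)\Big(a^2-1+\frac14\sum_{k=1}^{8}\frac{|z_k|^2-a^2}{r_k^2}\Big)^4.$$ *)

(* Defs.v *)
(* Complex numbers are modelled by an arbitrary
   numClosedFieldType C (algebraically closed field with conjugation/norm,
   e.g. algC); the statement is first-order so this covers the complex case. *)
From HB Require Import structures.
From mathcomp Require Import all_boot all_order all_algebra.
Set Implicit Arguments. Unset Strict Implicit. Unset Printing Implicit Defensive.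
Import Order.TTheory GRing.Theory Num.Theory.
Local Open Scope ring_scope.

Definition pol9 (C : numClosedFieldType) (a : C) (z : 'I_8 -> C) : {poly C} :=
  ('X - a%:P) * \prod_(k < 8) ('X - (z k)%:P).

(* Main.v *)
Require Import Defs.
From HB Require Import structures.
From mathcomp Require Import all_boot all_order all_algebra.
From mathcomp Require Import ring.
Import Order.TTheory GRing.Theory Num.Theory.
Local Open Scope ring_scope.

Lemma logder (F : fieldType) (I : Type) (r : seq I) (c : I -> F) (x : F) :
  (forall i, x - c i != 0) ->
  (\prod_(i <- r) ('X - (c i)%:P))^`().[x] =
  (\prod_(i <- r) ('X - (c i)%:P)).[x] * \sum_(i <- r) (x - c i)^-1.
Proof.
move=> hc; elim: r => [|i r IH]; first by rewrite !big_nil derivC !hornerE; ring.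
rewrite !big_cons derivM derivXsubC mul1r !(hornerD, hornerM) IH !hornerE.
have := hc i; move: (x - c i) => d hd.
rewrite /=; move: (\prod_(j <- r) _).[x] (\sum_(j <- r) _) => A B. by field.

Qed.

Lemma key (C : numClosedFieldType) (a : C) (z zeta : 'I_8 -> C)
  (hza : forall k, z k != a)
  (hderiv : (pol9 a z)^`() = 9%:R *: \prod_(j < 8) ('X - (zeta j)%:P))
  (hzeta : forall j, a - zeta j != 0) :
  \sum_(j < 8) (a - zeta j)^-1 = 2%:R * \sum_(k < 8) (a - z k)^-1.
Proof.
set q := \prod_(k < 8) ('X - (z k)%:P).
set Q := \prod_(j < 8) ('X - (zeta j)%:P).
have hzk : forall k, a - z k != 0 by move=> k; rewrite subr_eq0 eq_sym.
have hp1 : (pol9 a z)^`() = q + ('X - a%:P) * q^`().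
  by rewrite /pol9 derivM derivXsubC mul1r.
have hp2 : (pol9 a z)^`()^`() = q^`() + q^`() + ('X - a%:P) * q^`()^`().
  by rewrite hp1 derivD derivM derivXsubC mul1r addrA.
have e1 : 9%:R * Q.[a] = q.[a].
  by move: (congr1 (fun p => p.[a]) hderiv); rewrite hp1 /= !hornerE subrr mul0r addr0.
have e2 : 9%:R * Q^`().[a] = 2%:R * q^`().[a].
  move: (congr1 (fun p => p^`().[a]) hderiv); rewrite hp2 /= derivZ !hornerE subrr mul0r addr0.
  by move=> h; rewrite /Q -h mulr2n mulrDl mul1r.
have hQ : Q^`().[a] = Q.[a] * \sum_(j < 8) (a - zeta j)^-1 by exact: logder.
have hq' : q^`().[a] = q.[a] * \sum_(k < 8) (a - z k)^-1 by exact: logder.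
have hq : q.[a] != 0 by rewrite /q horner_prod; apply/prodf_neq0 => k _; rewrite !hornerE hzk.
have hQa : 9%:R * Q.[a] != 0 by rewrite e1.
apply: (mulfI hQa).
transitivity (9%:R * Q^`().[a]); first by rewrite hQ mulrA.
rewrite e2 hq' -e1; ring.
Qed.
Lemma cl1 (C : numClosedFieldType) (a x : C) : a \is Num.real -> a - x != 0 ->
  (`|x| / `|a - x|) ^+ 2 = a ^+ 2 * ((a - x) * (a - x)^*)^-1 - a * ((a - x)^-1 + ((a - x)^*)^-1) + 1.
Proof.
move=> ha; have [u hu] : exists u, u = a - x by eexists. rewrite -hu => hu0.
have hx : x = a - u by rewrite hu; ring.
have hc : u^* != 0 by rewrite conjC_eq0.
rewrite expr_div_n !normCK hx rmorphB /= (conj_Creal ha).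
by field; apply/andP.
Qed.

Lemma cl2 (C : numClosedFieldType) (a x : C) : a \is Num.real -> a - x != 0 ->
  (`|x| ^+ 2 - a ^+ 2) / `|a - x| ^+ 2 = 1 - a * ((a - x)^-1 + ((a - x)^*)^-1).
Proof.
move=> ha; have [u hu] : exists u, u = a - x by eexists. rewrite -hu => hu0.
have hx : x = a - u by rewrite hu; ring.
have hc : u^* != 0 by rewrite conjC_eq0.
rewrite !normCK hx rmorphB /= (conj_Creal ha).
by field; apply/andP.
Qed.

Lemma ineq (C : numClosedFieldType) (a : C) (z zeta : 'I_8 -> C)
  (ha : a \is Num.real) (ha0 : 0 < a)
  (hzk : forall k, a - z k != 0)
  (hrho : forall j, 1 <= `|a - zeta j|)
  (hkey : \sum_(j < 8) (a - zeta j)^-1 = 2%:R * \sum_(k < 8) (a - z k)^-1) :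
  \prod_(j < 8) `|zeta j|
    <= (\prod_(j < 8) `|a - zeta j|) *
       (a ^+ 2 - 1 + 4%:R^-1 * \sum_(k < 8) ((`|z k| ^+ 2 - a ^+ 2) / `|a - z k| ^+ 2)) ^+ 4.
Proof.
have hu : forall j, a - zeta j != 0.
  by move=> j; rewrite -normr_gt0; apply: lt_le_trans (hrho j).
have hS' : \sum_(j < 8) ((a - zeta j)^*)^-1 = 2%:R * \sum_(k < 8) ((a - z k)^*)^-1.
  transitivity ((\sum_(j < 8) (a - zeta j)^-1)^* ); first by rewrite rmorph_sum; apply: eq_bigr => j _; rewrite fmorphV.
  by rewrite hkey rmorphM /= conjC_nat rmorph_sum; congr (_ * _); apply: eq_bigr => j _; rewrite fmorphV.
set S := \sum_(j < 8) (a - zeta j)^-1.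
set T := \sum_(k < 8) (a - z k)^-1.
set S' := \sum_(j < 8) ((a - zeta j)^*)^-1.
set T' := \sum_(k < 8) ((a - z k)^*)^-1.
set R := \sum_(j < 8) ((a - zeta j) * (a - zeta j)^*)^-1.
have hX : \sum_(j < 8) (`|zeta j| / `|a - zeta j|) ^+ 2 = a ^+ 2 * R - a * (S + S') + 8%:R.
  rewrite (eq_bigr _ (fun j _ => @cl1 _ a (zeta j) ha (hu j))) !big_split /= sumrN -!mulr_sumr sumr_const card_ord.
  by rewrite big_split.
have hY : \sum_(k < 8) ((`|z k| ^+ 2 - a ^+ 2) / `|a - z k| ^+ 2) = 8%:R - a * (T + T').
  rewrite (eq_bigr _ (fun k _ => @cl2 _ a (z k) ha (hzk k))) !big_split /= sumrN -!mulr_sumr sumr_const card_ord.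
  by rewrite big_split.
rewrite hY.
set M := a ^+ 2 - 1 + 4%:R^-1 * (8%:R - a * (T + T')).
set X := fun j : 'I_8 => (`|zeta j| / `|a - zeta j|) ^+ 2.
set m := (\sum_(j < 8) X j) / 8%:R.
have hR : R <= 8%:R.
  apply: (@le_trans _ _ (\sum_(j < 8) (1 : C))); last by rewrite sumr_const card_ord.
  rewrite /R; apply: ler_sum => j _.
  rewrite -normCK invf_le1 ?exprn_ege1 // exprn_gt0 //; exact: lt_le_trans (hrho j).
have hmM : m <= M.
  rewrite -subr_ge0; have -> : M - m = a ^+ 2 * (8%:R - R) / 8%:R.
    rewrite /m /X hX /S /S' hkey hS' /M /T /T'; by field.
  apply: divr_ge0 => //; apply: mulr_ge0; [exact: exprn_ge0 (ltW ha0) | by rewrite subr_ge0].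
have hX0 : forall j, 0 <= X j by move=> j; rewrite exprn_ge0 // divr_ge0.
have hm0 : 0 <= m by rewrite divr_ge0 // sumr_ge0.
have hagm := leif_AGM (A := 'I_8) (fun j _ => hX0 j).
have h1 : \prod_(j < 8) X j <= m ^+ 8.
  have := hagm.1; rewrite card_ord; exact.
have h2 : \prod_(j < 8) X j <= (M ^+ 4) ^+ 2.
  rewrite -exprM; apply: le_trans h1 _; apply: lerXn2r => //; rewrite nnegrE //; exact: le_trans hmM.
have hM0 : 0 <= M by exact: le_trans hmM.
have h3 : \prod_(j < 8) (`|zeta j| / `|a - zeta j|) <= M ^+ 4.
  rewrite -ler_sqr ?nnegrE ?exprn_ge0 ?prodr_ge0 // => [|j _]; last by rewrite divr_ge0.
  by rewrite -prodrXl.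
have hpos : 0 < \prod_(j < 8) `|a - zeta j|.
  by apply: prodr_gt0 => j _; exact: lt_le_trans (hrho j).
have -> : \prod_(j < 8) `|zeta j| = \prod_(j < 8) `|a - zeta j| * \prod_(j < 8) (`|zeta j| / `|a - zeta j|).
  rewrite -big_split /=; apply: eq_bigr => j _; by rewrite mulrC divfK // normr_eq0 hu.
by apply: ler_wpM2l => //; exact: ltW.
Qed.

Theorem lemma3p11 (C : numClosedFieldType) (a : C) (z zeta : 'I_8 -> C)
  (ha : a \is Num.real) (ha0 : 0 < a) (ha1 : a < 1)
  (hz : forall k, `|z k| <= 1) (hza : forall k, z k != a)
  (hderiv : (pol9 a z)^`() = 9%:R *: \prod_(j < 8) ('X - (zeta j)%:P))
  (hrho : forall j, 1 <= `|a - zeta j|) :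
  \prod_(j < 8) `|zeta j|
    <= (\prod_(j < 8) `|a - zeta j|) *
       (a ^+ 2 - 1 + 4%:R^-1 * \sum_(k < 8) ((`|z k| ^+ 2 - a ^+ 2) / `|a - z k| ^+ 2)) ^+ 4.
Proof.
have hzeta : forall j, a - zeta j != 0.
  by move=> j; rewrite -normr_gt0; apply: lt_le_trans (hrho j).
have hzk : forall k, a - z k != 0 by move=> k; rewrite subr_eq0 eq_sym.
exact: (@ineq C a z zeta ha ha0 hzk hrho (@key C a z zeta hza hderiv hzeta)).
Qed.
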